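(* Let $\mathbf{W}=\langle W;\to,\neg,{}^{+},{}^{-},1\rangle$ be a quasi-Wajsberg* algebra, $0:=1\to 1$ and $x\wedge y:=\neg(\neg x\vee\neg y)$. Then for any $x,y,z\in W$: (1) $x\vee x=0\to x$ and $x\wedge x=0\to x$; (2) $x\to(y\wedge z)=(x\to y)\wedge(x\to z)$, $(x\wedge y)\to z=(x\to z)\vee(y\to z)$ and $(x\vee y)\to z=(x\to z)\wedge(y\to z)$; (3) $x\to y=(0\to x)\to y=x\to(0\to y)=(0\to x)\to(0\to y)$; (4) $x\vee y=0\to(x\vee y)=(0\to x)\vee y=x\vee(0\to y)=(0\to x)\vee(0\to y)$ and $x\wedge y=0\to(x\wedge y)=(0\to x)\wedge y=x\wedge(0\to y)=(0\to x)\wedge(0\to y)$.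
   Context: A quasi-Wajsberg* algebra is an algebra $\langle W;\to,\neg,{}^{+},{}^{-},1\rangle$ of type $\langle2,1,1,1,0\rangle$ such that for all $x,y,z\in W$: (QW*1) $x\to y=\neg y\to\neg x$; (QW*2) $(x\to 1)\to((y\to 1)\to z)=(y\to 1)\to((x\to 1)\to z)$; (QW*3) $(1\to x)\to 1=1$; (QW*4) $(z\to z)\to(x\to y)=x\to y$; (QW*5) $(1\to 1)\to x^{+}=((1\to 1)\to x)^{+}=(x\to 1)\to 1$ and $(1\to 1)\to x^{-}=((1\to 1)\to x)^{-}=(x\to\neg 1)\to\neg 1$; (QW*6) $x\to y=(y^{+}\to x^{-})\to(x^{+}\to y^{-})$; (QW*7) $\neg(x\to y)=y\to x$; (QW*8) $\neg\neg x=x$; (QW*9) $(x\to(\neg x\to y))^{+}=x^{+}\to(\neg x^{+}\to y^{+})$; (QW*10) $x\vee y=y\vee x$; (QW*11) $x\vee(y\vee z)=(x\vee y)\vee z$; (QW*12) $x\to(y\vee z)=(x\to y)\vee(x\to z)$; where $x\vee y:=((x^{+}\to y^{+})^{+}\to(\neg x)^{-})\to((y^{-}\to x^{-})^{-}\to x^{-})$. Conventions: ${}^+,{}^-$ bind tighter than $\neg$, which binds tighter than $\to$, and $\to$ binds tighter than $\vee,\wedge$. *)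

(* Defs.v *)
Record QWStarAlgebra := {
  qw_car :> Type;
  qw_imp : qw_car -> qw_car -> qw_car;
  qw_neg : qw_car -> qw_car;
  qw_plus : qw_car -> qw_car;
  qw_minus : qw_car -> qw_car;
  qw_one : qw_car
}.

Section Ops.
Variable W : QWStarAlgebra.
Local Notation "x --> y" := (qw_imp W x y) (at level 55, right associativity).
Local Notation "~~ x" := (qw_neg W x) (at level 35, right associativity).
Local Notation "x ^+" := (qw_plus W x) (at level 30).
Local Notation "x ^-" := (qw_minus W x) (at level 30).
Local Notation "1" := (qw_one W).

Definition qw_join (x y : W) : W :=
  (((x ^+ --> y ^+) ^+ --> (~~ x) ^-) --> ((y ^- --> x ^-) ^- --> x ^-)).

Definition qw_meet (x y : W) : W := ~~ (qw_join (~~ x) (~~ y)).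

Definition qw_zero : W := 1 --> 1.

Definition is_QWStar : Prop :=
  (forall x y : W, x --> y = ~~ y --> ~~ x) /\
  (forall x y z : W, (x --> 1) --> ((y --> 1) --> z) = (y --> 1) --> ((x --> 1) --> z)) /\
  (forall x : W, (1 --> x) --> 1 = 1) /\
  (forall x y z : W, (z --> z) --> (x --> y) = x --> y) /\
  (forall x : W, (1 --> 1) --> x ^+ = ((1 --> 1) --> x) ^+ /\
                 ((1 --> 1) --> x) ^+ = (x --> 1) --> 1) /\
  (forall x : W, (1 --> 1) --> x ^- = ((1 --> 1) --> x) ^- /\
                 ((1 --> 1) --> x) ^- = (x --> ~~ 1) --> ~~ 1) /\
  (forall x y : W, x --> y = (y ^+ --> x ^-) --> (x ^+ --> y ^-)) /\
  (forall x y : W, ~~ (x --> y) = y --> x) /\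
  (forall x : W, ~~ ~~ x = x) /\
  (forall x y : W, (x --> (~~ x --> y)) ^+ = x ^+ --> (~~ (x ^+) --> y ^+)) /\
  (forall x y : W, qw_join x y = qw_join y x) /\
  (forall x y z : W, qw_join x (qw_join y z) = qw_join (qw_join x y) z) /\
  (forall x y z : W, x --> qw_join y z = qw_join (x --> y) (x --> z)).
End Ops.

(* Main.v *)
Require Import Defs.

Theorem proposition3p3 (W : QWStarAlgebra) (HW : is_QWStar W) :
  let imp := qw_imp W in
  let join := qw_join W in
  let meet := qw_meet W in
  let O := qw_zero W in
  forall x y z : W,
    (* (1) *)
    (join x x = imp O x /\ meet x x = imp O x) /\
    (* (2) *)
    (imp x (meet y z) = meet (imp x y) (imp x z) /\
     imp (meet x y) z = join (imp x z) (imp y z) /\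
     imp (join x y) z = meet (imp x z) (imp y z)) /\
    (* (3) *)
    (imp x y = imp (imp O x) y /\
     imp (imp O x) y = imp x (imp O y) /\
     imp x (imp O y) = imp (imp O x) (imp O y)) /\
    (* (4) *)
    (join x y = imp O (join x y) /\
     imp O (join x y) = join (imp O x) y /\
     join (imp O x) y = join x (imp O y) /\
     join x (imp O y) = join (imp O x) (imp O y)) /\
    (meet x y = imp O (meet x y) /\
     imp O (meet x y) = meet (imp O x) y /\
     meet (imp O x) y = meet x (imp O y) /\
     meet x (imp O y) = meet (imp O x) (imp O y)).
Proof.
  destruct HW as [A1 [A2 [A3 [A4 [A5 [A5' [A6 [A7 [A8 [A9 [A10 [A11 A12]]]]]]]]]]]].
  intros imp join meet O.
  subst imp join meet O.
  unfold qw_meet, qw_zero.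
  set (i := qw_imp W) in *.
  set (n := qw_neg W) in *.
  set (p := qw_plus W) in *.
  set (m := qw_minus W) in *.
  set (o := qw_one W) in *.
  set (j := qw_join W) in *.
  assert (Hj : forall a b, j a b = i (i (p (i (p a) (p b))) (m (n a))) (i (m (i (m b) (m a))) (m a))) by reflexivity.
  assert (F2 : forall a b, i (i o o) (i a b) = i a b) by (intros; apply A4).
  assert (N0 : n (i o o) = i o o) by apply A7.
  assert (F1 : forall w, n (i (i o o) w) = i (i o o) (n w)).
  { intro w. rewrite A7, A1, N0. reflexivity. }
  assert (T1 : forall w, i w w = i o o).
  { intro w. rewrite <- (A4 w w o). rewrite (A1 (i o o) (i w w)).
    rewrite (A7 w w), (A7 o o). apply A4. }
  assert (F4 : i (i o o) o = o) by apply A3.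
  assert (P0 : p (i o o) = i o o).
  { destruct (A5 (i o o)) as [_ H]. rewrite (T1 (i o o)), F4 in H. exact H. }
  assert (M0 : m (i o o) = i o o).
  { destruct (A5' (i o o)) as [_ H]. rewrite (T1 (i o o)) in H. rewrite H.
    replace (i (i o o) (n o)) with (n o). apply (T1 (n o)).
    rewrite <- F1, F4. reflexivity. }
  assert (J1 : forall x, j x x = i (i o o) x).
  { intro x. rewrite Hj, (T1 (p x)), (T1 (m x)), P0, M0.
    rewrite (A6 (i o o) x), P0, M0.
    f_equal.
    destruct (A5' (n x)) as [H1 H2]. rewrite H1, H2.
    rewrite <- (A1 o x), (A1 (p x) (i o o)), N0, <- F1.
    destruct (A5 x) as [H3 H4]. rewrite H3, H4.
    rewrite (A7 (i x o) o), (A1 (i o x) (n o)), A8, A7. reflexivity. }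
  assert (LA : forall a b, i a (i (i o o) b) = i a b).
  { intros a b. rewrite <- J1, A12, J1. apply F2. }
  assert (LB : forall a b, i (i (i o o) a) b = i a b).
  { intros a b. rewrite <- A7, LA, A7. reflexivity. }
  assert (PR : forall a, p (i (i o o) a) = i (i o o) (p a)).
  { intro a. symmetry. apply A5. }
  assert (MR : forall a, m (i (i o o) a) = i (i o o) (m a)).
  { intro a. symmetry. apply A5'. }
  assert (JL : forall a b, j (i (i o o) a) b = j a b).
  { intros a b. rewrite !Hj, F1, PR, MR, MR, LB, LA, LA, LA. reflexivity. }
  assert (JR : forall a b, j a (i (i o o) b) = j a b).
  { intros a b. rewrite !Hj, PR, MR, LA, LB. reflexivity. }
  intros x y z.
  split; [split|split; [split; [|split]|split; [split; [|split]|split]]].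
  - apply J1.
  - rewrite J1, F1, A8. reflexivity.
  - rewrite <- (A7 (n (j (n y) (n z))) x), (A1 (n (j (n y) (n z))) x), A8, A12,
      <- (A1 y x), <- (A1 z x), (A7 x y), (A7 x z). reflexivity.
  - rewrite (A1 (n (j (n x) (n y))) z), A8, A12, <- (A1 x z), <- (A1 y z). reflexivity.
  - rewrite (A7 x z), (A7 y z), <- A12, A7. reflexivity.
  - symmetry; apply LB.
  - rewrite LB, LA. reflexivity.
  - rewrite LB. reflexivity.
  - split; [|split; [|split]].
    + symmetry. rewrite (Hj x y). apply F2.
    + rewrite JL. rewrite (Hj x y). apply F2.
    + rewrite JL, JR. reflexivity.
    + rewrite JL. reflexivity.
  - split; [|split; [|split]].
    + rewrite <- F1, (Hj (n x) (n y)), F2. reflexivity.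
    + rewrite (F1 x), JL, <- F1, (Hj (n x) (n y)), F2. reflexivity.
    + rewrite (F1 x), (F1 y), JL, JR. reflexivity.
    + rewrite (F1 x), (F1 y), JL. reflexivity.
Qed.
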